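(* Let $\delta\in(0,1)$ and $0\le p<\delta$. Then for every $n\ge1$ and every nonempty $\mathcal{A}_n\subseteq\{+,-\}^n$, the frame erasure rate satisfies $P_e(\mathcal{A}_n)>p$, whereas uncoded transmission ($n=0$) has frame erasure rate $p$. Consequently, for any finite set $\mathcal N=\{0,1,\dots,n_{\max}\}$ and any choice of nonempty information sets, $\arg\min_{n\in\mathcal N}P_e(\mathcal A_n)=0$.
   Context: Random erasure-indicator vectors $\mathbf{E}_{s,\delta}=(E^{(\mathbf{u})}_{s,\delta})_{\mathbf{u}\in\{+,-\}^s}$ are defined recursively: $E^{(\emptyset)}_{0,\delta}\sim$ Bernoulli$(p)$; given $\mathbf{E}_{s-1,\delta}$, take two independent copies $\mathbf{E}',\mathbf{E}''$ and i.i.d. Bernoulli$(\delta)$ variables $\Delta^{(\mathbf{u})}_s$ independent of them; for $\mathbf{t}\in\{+,-\}^{s-1}$ with $A=E'^{(\mathbf{t})}+E''^{(\mathbf{t})}-E'^{(\mathbf{t})}E''^{(\mathbf{t})}$ and $B=E'^{(\mathbf{t})}E''^{(\mathbf{t})}$, set $E^{(\mathbf{t}-)}_{s,\delta}=A+(1-A)\Delta^{(\mathbf{t}-)}_s$ and $E^{(\mathbf{t}+)}_{s,\delta}=B+(1-B)\Delta^{(\mathbf{t}+)}_s$. For a polar code of length $2^n$ over BEC$(p)$ with information set $\mathcal{A}_n\subseteq\{+,-\}^n$, decoded by a faulty SC decoder whose internal messages are independently erased with probability $\delta$, the frame erasure rate is $P_e(\mathcal{A}_n)=\Pr\big(\exists\,\mathbf{s}\in\mathcal{A}_n: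 E^{(\mathbf{s})}_{n,\delta}=1\big)$; for $n=0$ (uncoded transmission) it equals $p$. *)

(* Defs.v *)
From HB Require Import structures.
From mathcomp Require Import all_boot all_order all_algebra.
Set Implicit Arguments. Unset Strict Implicit. Unset Printing Implicit Defensive.
Import Order.TTheory GRing.Theory Num.Theory.
Local Open Scope ring_scope.

(* An index u in {+,-}^s : a function 'I_s -> bool, true = '+', false = '-'.
   Position s-1 (ord_max) is the last appended sign. *)
Definition Idx (s : nat) := {ffun 'I_s -> bool}.
(* A realisation of the erasure-indicator vector E_s = (E^(u))_{u in {+,-}^s}. *)
Definition Vec (s : nat) := {ffun Idx s -> bool}.

Definition prefix (s : nat) (u : Idx s.+1) : Idx s :=
  [ffun i : 'I_s => u (widen_ord (leqnSn s) i)].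

(* One recursion step: from the two copies E', E'' and the Bernoulli(delta)
   variables Delta_s, build E_s.  With 0/1 variables,
   A + (1-A) Delta = A || Delta, A = E' || E'', B = E' && E''. *)
Definition step (s : nat) (e' e'' : Vec s) (d : Vec s.+1) : Vec s.+1 :=
  [ffun u : Idx s.+1 =>
     let t := prefix u in
     if u ord_max then (e' t && e'' t) || d u
     else (e' t || e'' t) || d u].

Definition bern (R : nzRingType) (q : R) (b : bool) : R := if b then q else 1 - q.

Fixpoint pmf (R : nzRingType) (p delta : R) (s : nat) : Vec s -> R :=
  match s return Vec s -> R with
  | 0 => fun e => \prod_(u : Idx 0) bern p (e u)
  | s'.+1 => fun e =>
      \sum_(e' : Vec s') \sum_(e'' : Vec s') \sum_(d : Vec s'.+1)
        (if e == step e' e'' d then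
           pmf p delta e' * pmf p delta e'' * \prod_(u : Idx s'.+1) bern delta (d u)
         else 0)
  end.

Definition Pe (R : nzRingType) (p delta : R) (n : nat) (A : {set Idx n}) : R :=
  \sum_(e : Vec n | [exists u in A, e u]) pmf p delta e.

(* Main.v *)
Require Import Defs.
From HB Require Import structures.
From mathcomp Require Import all_boot all_order all_algebra.
Import Order.TTheory GRing.Theory Num.Theory.
Local Open Scope ring_scope.
Set Implicit Arguments. Unset Strict Implicit.

Section H.
Variable R : realFieldType.

Lemma marg (I : finType) (q : R) (u0 : I) :
  \sum_(d : {ffun I -> bool}) (if d u0 then \prod_u bern q (d u) else 0) = q.
Proof.
pose F := fun (u : I) (b : bool) => if u == u0 then (if b then q else 0) else bern q b.
rewrite (eq_bigr (fun d : {ffun I -> bool} => \prod_u F u (d u))).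
  rewrite -(bigA_distr_bigA F) /F (bigD1 u0) //= big_bool eqxx /= addr0 big1 ?mulr1 //.
  by move=> i /negbTE ->; rewrite big_bool /= /bern addrC subrK.
move=> d _; rewrite /F (bigD1 u0) //= [in RHS](bigD1 u0) //= eqxx.
rewrite [in RHS](eq_bigr (fun u => bern q (d u))); last by move=> i /negbTE ->.
by case: (d u0); rewrite ?mul0r.
Qed.

Lemma tot (I : finType) (q : R) :
  \sum_(d : {ffun I -> bool}) \prod_u bern q (d u) = 1.
Proof.
rewrite -(bigA_distr_bigA (fun (u : I) b => bern q b)) big1 // => i _.
by rewrite big_bool /= /bern addrC subrK.
Qed.

Lemma bern_ge0 (q : R) b : 0 <= q <= 1 -> 0 <= bern q b.
Proof. by case/andP=> h0 h1; case: b => //=; rewrite subr_ge0. Qed.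

Lemma pmf_ge0 (p d : R) s (e : Vec s) : 0 <= p <= 1 -> 0 <= d <= 1 -> 0 <= pmf p d e.
Proof.
move=> hp hd; elim: s e => [|s IH] e /=.
  by apply: prodr_ge0 => u _; apply: bern_ge0.
do 3 (apply: sumr_ge0 => ? _); case: ifP => // _.
by rewrite !mulr_ge0 //; apply: prodr_ge0 => u _; apply: bern_ge0.
Qed.

Lemma pmf_unfold (p d : R) s (P : pred (Vec s.+1)) :
  \sum_(e : Vec s.+1 | P e) pmf p d e =
  \sum_(e' : Vec s) \sum_(e'' : Vec s) \sum_(dd : Vec s.+1)
    (if P (step e' e'' dd) then
       pmf p d e' * pmf p d e'' * \prod_(u : Idx s.+1) bern d (dd u) else 0).
Proof.
rewrite big_mkcond /=.
rewrite (eq_bigr (fun e : Vec s.+1 => \sum_(e' : Vec s) \sum_(e'' : Vec s) \sum_(dd : Vec s.+1)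
   (if e == step e' e'' dd then (if P (step e' e'' dd) then
       pmf p d e' * pmf p d e'' * \prod_(u : Idx s.+1) bern d (dd u) else 0) else 0))).
  rewrite exchange_big /=; apply: eq_bigr => e' _.
  rewrite exchange_big /=; apply: eq_bigr => e'' _.
  rewrite exchange_big /=; apply: eq_bigr => dd _.
  rewrite (bigD1 (step e' e'' dd)) //= eqxx [X in _ + X]big1 ?addr0 //.
  by move=> e /negbTE ->.
move=> e _; case: ifP => hP.
  do 3 (apply: eq_bigr => ? _); case: eqP => // <-; by rewrite hP.
rewrite big1 // => ? _; rewrite big1 // => ? _; rewrite big1 // => ? _.
by case: eqP => // <-; rewrite hP.
Qed.

End H.

Section M.
Variable R : realFieldType.

Lemma pmf_sum (p d : R) s : \sum_(e : Vec s) pmf p d e = 1.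
Proof.
elim: s => [|s IH]; first exact: tot.
have := pmf_unfold p d xpredT => /= ->.
rewrite -[RHS]IH; apply: eq_bigr => e' _.
transitivity (pmf p d e' * \sum_(e'' : Vec s) pmf p d e''); last by rewrite IH mulr1.
rewrite mulr_sumr; apply: eq_bigr => e'' _.
by rewrite -mulr_sumr tot mulr1.
Qed.

Lemma all0 (u : Idx 0) : u = [ffun i => false].
Proof. by apply/ffunP => -[]. Qed.

Lemma Pe0 (p d : R) (A : {set Idx 0}) : A != set0 -> Pe p d A = p.
Proof.
move=> /set0Pn [u0 Hu0].
rewrite /Pe (eq_bigl (fun e : Vec 0 => e u0)); first by rewrite big_mkcond; exact: marg.
move=> e; apply/existsP/idP => [[u /andP [_]]|h]; first by rewrite (all0 u) -(all0 u0).
by exists u0; rewrite Hu0.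
Qed.

Lemma Pe_pos (p d : R) s (A : {set Idx s.+1}) : 0 <= p <= 1 -> 0 <= d <= 1 ->
  A != set0 -> d <= Pe p d A.
Proof.
move=> hp hd /set0Pn [u0 Hu0].
rewrite /Pe pmf_unfold.
apply: (@le_trans _ _ (\sum_(e' : Vec s) \sum_(e'' : Vec s) \sum_(dd : Vec s.+1)
   (if dd u0 then pmf p d e' * pmf p d e'' * \prod_(u : Idx s.+1) bern d (dd u) else 0))).
  rewrite le_eqVlt; apply/orP; left; apply/eqP; apply/esym.
  transitivity (\sum_(e' : Vec s) pmf p d e' * (\sum_(e'' : Vec s) pmf p d e'' * d)); last first.
    by rewrite -mulr_suml pmf_sum mul1r -mulr_suml pmf_sum mul1r.
  apply: eq_bigr => e' _; rewrite mulr_sumr; apply: eq_bigr => e'' _.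
  rewrite mulrA -[X in _ = _ * X](marg d u0) mulr_sumr; apply: eq_bigr => dd _.
  by case: (dd u0); rewrite ?mulr0.
do 3 (apply: ler_sum => ? _).
case: ifP => hu.
  rewrite ifT //; apply/existsP; exists u0; rewrite Hu0 /step ffunE.
  by case: ifP; rewrite hu !orbT.
case: ifP => // _.
by rewrite !mulr_ge0 ?pmf_ge0 //; apply: prodr_ge0 => u _; apply: bern_ge0.
Qed.

End M.

Theorem proposition7 (R : realFieldType) (p delta : R)
  (hd0 : 0 < delta) (hd1 : delta < 1) (hp0 : 0 <= p) (hpd : p < delta) :
  (* coded transmission, n >= 1 *)
  (forall (n : nat) (A : {set Idx n}), (0 < n)%N -> A != set0 ->
      p < Pe p delta A)
  /\ (* uncoded transmission, n = 0 (the only nonempty A_0 is the full set) *)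
  Pe p delta [set: Idx 0] = p
  /\ (* consequence: argmin over N = {0,...,nmax} is exactly {0} *)
  (forall (nmax : nat) (A : forall n : nat, {set Idx n}),
      (forall n, A n != set0) ->
      forall n : nat, (n <= nmax)%N ->
        Pe p delta (A 0%N) <= Pe p delta (A n)
        /\ ((0 < n)%N -> Pe p delta (A 0%N) < Pe p delta (A n))).
Proof.
have hp : 0 <= p <= 1 by rewrite hp0 /= ltW // (lt_trans hpd hd1).
have hd : 0 <= delta <= 1 by rewrite !ltW.
have P1 : forall (n : nat) (A : {set Idx n}), (0 < n)%N -> A != set0 ->
      p < Pe p delta A.
  move=> [|n] A // _ hA; exact: lt_le_trans hpd (Pe_pos hp hd hA).
split=> //; split.
  by apply: Pe0; apply/set0Pn; exists [ffun i => false]; rewrite inE.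
move=> nmax A hA n _; rewrite Pe0 //.
case: n => [|n]; first by rewrite Pe0.
have h := P1 _ (A n.+1) isT (hA _); by split => //; rewrite ltW.
Qed.
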